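(* Let $a$ and $c$ be coprime positive integers with $a+c$ odd. Then for every integer $p\geq1$ and all $x,z\in\mathbb{R}$, $$ac^{p}S_{p}(a,c:x,z)+ca^{p}S_{p}(c,a:z,x)=\sum_{j=1}^{p}\binom{p-1}{j-1}a^{p+1-j}c^{j}\mathcal{E}_{p-j}(z)\mathcal{E}_{j-1}(x).$$
   Context: $E_n(x)$ denotes the $n$th Euler polynomial, defined by $\frac{2e^{xt}}{e^t+1}=\sum_{n\ge0}E_n(x)\frac{t^n}{n!}$. The $n$th Euler function $\mathcal{E}_n$ ($n\ge0$) is defined by $\mathcal{E}_n(x)=E_n(x)$ for $0\le x<1$ and $\mathcal{E}_n(x+m)=(-1)^m\mathcal{E}_n(x)$ for $m\in\mathbb{Z}$. For a positive integer $a$, a positive integer $c$, an integer $p\ge1$ and real $x,z$, define $$S_{p}(a,c:x,z)=\sum_{\mu=0}^{c-1}(-1)^{\mu}\mathcal{E}_{p-1}\Big(a\frac{\mu+z}{c}+x\Big)\mathcal{E}_{0}\Big(\frac{\mu+z}{c}\Big).$$ *)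

(* Defs.v *)
From Stdlib Require Import Reals Lra Lia List.
Open Scope R_scope.

(* The generating function
     2 e^{xt} / (e^t + 1) = sum_n E_n(x) t^n / n!
   is equivalent (multiply by e^t + 1 and compare coefficients of t^n/n!) to
     E_n(x) + sum_{k=0}^{n} C(n,k) E_k(x) = 2 x^n,
   i.e. E_0(x) = 1 and E_n(x) = x^n - 1/2 sum_{k=0}^{n-1} C(n,k) E_k(x).
   [euler_list n] is the list [E_0; ...; E_n]. *)
Fixpoint euler_list (n : nat) : list (R -> R) :=
  match n with
  | O => (fun _ => 1) :: nil
  | S m =>
      let l := euler_list m in
      l ++ ((fun x => x ^ (S m)
               - / 2 * sum_f_R0 (fun k => Binomial.C (S m) k * nth k l (fun _ => 0) x) m)
            :: nil)
  end.

Definition euler_poly (n : nat) (x : R) : R := nth n (euler_list n) (fun _ => 0) x.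

Definition euler_fun (n : nat) (x : R) : R :=
  powerRZ (-1) (Int_part x) * euler_poly n (x - IZR (Int_part x)).

Definition S_sum (p a c : nat) (x z : R) : R :=
  sum_f_R0 (fun mu =>
     (-1) ^ mu
     * euler_fun (p - 1) (INR a * (INR mu + z) / INR c + x)
     * euler_fun 0 ((INR mu + z) / INR c)) (c - 1).

(* Main.v *)
Require Import Defs.
From Stdlib Require Import Reals Arith Lra Lia List ZArith.
Open Scope R_scope.

Lemma sum_lin (f g : nat -> R) (al be : R) n :
  sum_f_R0 (fun k => al * f k + be * g k) n = al * sum_f_R0 f n + be * sum_f_R0 g n.
Proof. induction n; simpl; [ring| rewrite IHn; ring]. Qed.

Lemma sum_scal_l (f : nat -> R) (al : R) n :
  sum_f_R0 (fun k => al * f k) n = al * sum_f_R0 f n.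
Proof. induction n; simpl; [ring| rewrite IHn; ring]. Qed.

Lemma sum_scal_r (f : nat -> R) (al : R) n :
  sum_f_R0 (fun k => f k * al) n = sum_f_R0 f n * al.
Proof. induction n; simpl; [ring| rewrite IHn; ring]. Qed.

Lemma sum_add (f g : nat -> R) n :
  sum_f_R0 (fun k => f k + g k) n = sum_f_R0 f n + sum_f_R0 g n.
Proof. induction n; simpl; [ring| rewrite IHn; ring]. Qed.

Lemma sum_shift_alt (g : nat -> R) (m : nat) :
  sum_f_R0 (fun i => (-1)^i * g (S i)) m
  = - sum_f_R0 (fun i => (-1)^i * g i) m + g 0%nat - (-1)^(S m) * g (S m).
Proof. induction m; simpl; [ring|]. rewrite IHm. simpl. ring. Qed.

Lemma sum_rev (f : nat -> R) n :
  sum_f_R0 f n = sum_f_R0 (fun k => f (n - k)%nat) n.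
Proof.
  induction n; [reflexivity|].
  rewrite (decomp_sum (fun k => f (S n - k)%nat) (S n)); [|lia].
  simpl pred. rewrite tech5, IHn. rewrite Nat.sub_0_r.
  simpl. ring.
Qed.

Lemma tri_exch (F : nat -> nat -> R) n :
  sum_f_R0 (fun k => sum_f_R0 (fun l => F k l) k) n
  = sum_f_R0 (fun l => sum_f_R0 (fun j => F (l + j)%nat l) (n - l)) n.
Proof.
  induction n; [reflexivity|].
  rewrite tech5, IHn.
  rewrite (tech5 (fun l => sum_f_R0 (fun j => F (l + j)%nat l) (S n - l))).
  rewrite Nat.sub_diag. simpl (sum_f_R0 _ 0). rewrite Nat.add_0_r.
  rewrite (tech5 (fun l => F (S n) l) n).
  rewrite (sum_eq (fun l => sum_f_R0 (fun j => F (l + j)%nat l) (S n - l))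
             (fun l => sum_f_R0 (fun j => F (l + j)%nat l) (n - l) + F (S n) l)).
  - rewrite sum_add. change (fun l : nat => F (S n) l) with (F (S n)). ring.
  - intros l Hl. replace (S n - l)%nat with (S (n - l)) by lia.
    rewrite tech5. replace (l + S (n - l))%nat with (S n) by lia. reflexivity.
Qed.

Definition conv (A B : nat -> R) (n : nat) : R :=
  sum_f_R0 (fun k => C n k * A k * B (n - k)%nat) n.

Lemma conv_ext A A' B B' n :
  (forall k, (k <= n)%nat -> A k = A' k) -> (forall k, (k <= n)%nat -> B k = B' k) ->
  conv A B n = conv A' B' n.
Proof.
  intros HA HB. unfold conv. apply sum_eq. intros i Hi.
  rewrite HA, HB by lia. reflexivity.
Qed.

Lemma C_symm n k : (k <= n)%nat -> C n (n - k) = C n k.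
Proof. intros H. rewrite (pascal_step1 n k H). reflexivity. Qed.

Lemma conv_comm A B n : conv A B n = conv B A n.
Proof.
  unfold conv. rewrite sum_rev. apply sum_eq. intros i Hi.
  rewrite C_symm by lia. replace (n - (n - i))%nat with i by lia. ring.
Qed.

Lemma C_prod n l j : (l + j <= n)%nat ->
  C n (l + j) * C (l + j) l = C n l * C (n - l) j.
Proof.
  intros H. unfold C.
  replace (l + j - l)%nat with j by lia.
  replace (n - (l + j))%nat with (n - l - j)%nat by lia.
  pose proof (INR_fact_neq_0 n). pose proof (INR_fact_neq_0 l).
  pose proof (INR_fact_neq_0 j). pose proof (INR_fact_neq_0 (l+j)).
  pose proof (INR_fact_neq_0 (n-l)). pose proof (INR_fact_neq_0 (n-l-j)).
  field. repeat split; auto.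
Qed.

Lemma conv_assoc A B D n : conv (conv A B) D n = conv A (conv B D) n.
Proof.
  unfold conv.
  rewrite (sum_eq _ (fun k => sum_f_R0 (fun l => C n k * C k l * A l * B (k - l)%nat * D (n - k)%nat) k)).
  2:{ intros k Hk. rewrite <- sum_scal_l, <- sum_scal_r. apply sum_eq. intros; ring. }
  rewrite tri_exch. apply sum_eq. intros l Hl.
  rewrite <- sum_scal_l. apply sum_eq. intros j Hj.
  replace (l + j - l)%nat with j by lia.
  replace (n - (l + j))%nat with (n - l - j)%nat by lia.
  rewrite (C_prod n l j) by lia. ring.
Qed.

Lemma conv_add_r A B B' n : conv A B n + conv A B' n = conv A (fun k => B k + B' k) n.
Proof. unfold conv. rewrite <- sum_add. apply sum_eq. intros; ring. Qed.

Lemma conv_scal_r A B al n : conv A (fun k => al * B k) n = al * conv A B n.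
Proof. unfold conv. rewrite <- sum_scal_l. apply sum_eq. intros; ring. Qed.
Lemma conv_scal_l A B al n : conv (fun k => al * A k) B n = al * conv A B n.
Proof. unfold conv. rewrite <- sum_scal_l. apply sum_eq. intros; ring. Qed.

Notation E := euler_poly.

Lemma euler_list_length n : length (euler_list n) = S n.
Proof. induction n; [reflexivity|]. simpl. rewrite length_app, IHn. simpl. lia. Qed.

Lemma euler_list_nth m k : (k <= m)%nat ->
  nth k (euler_list m) (fun _ => 0) = nth k (euler_list k) (fun _ => 0).
Proof.
  induction m; intros H.
  - replace k with 0%nat by lia. reflexivity.
  - destruct (Nat.eq_dec k (S m)) as [->|Hne]; [reflexivity|].
    simpl. rewrite app_nth1 by (rewrite euler_list_length; lia). apply IHm. lia.
Qed.

Lemma E0 y : E 0 y = 1.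
Proof. reflexivity. Qed.

Lemma E_succ m x : E (S m) x = x ^ (S m) - / 2 * sum_f_R0 (fun k => C (S m) k * E k x) m.
Proof.
  unfold euler_poly at 1. simpl.
  rewrite app_nth2 by (rewrite euler_list_length; lia).
  rewrite euler_list_length, Nat.sub_diag. simpl.
  f_equal. f_equal. apply sum_eq. intros i Hi. unfold euler_poly.
  rewrite euler_list_nth by lia. reflexivity.
Qed.

Lemma C_nn n : C n n = 1.
Proof. unfold C. rewrite Nat.sub_diag. simpl. field. apply INR_fact_neq_0. Qed.

Lemma E_rec n x : E n x + sum_f_R0 (fun k => C n k * E k x) n = 2 * x ^ n.
Proof.
  destruct n.
  - simpl. rewrite E0, C_nn. lra.
  - rewrite tech5, C_nn, E_succ. set (s := sum_f_R0 _ n). set (y := x ^ S n). field.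
Qed.

Lemma E_unique (P : nat -> R) x :
  (forall n, P n + sum_f_R0 (fun k => C n k * P k) n = 2 * x ^ n) ->
  forall n, P n = E n x.
Proof.
  intros HP.
  assert (forall n k, (k <= n)%nat -> P k = E k x).
  { induction n; intros k Hk.
    - replace k with 0%nat by lia. specialize (HP 0%nat). simpl in HP.
      rewrite C_nn in HP. rewrite E0. lra.
    - destruct (Nat.eq_dec k (S n)) as [->|Hne]; [|apply IHn; lia].
      pose proof (HP (S n)) as H1. pose proof (E_rec (S n) x) as H2.
      rewrite tech5, C_nn in H1, H2.
      rewrite (sum_eq (fun k => C (S n) k * P k) (fun k => C (S n) k * E k x)) in H1.
      + lra.
      + intros i Hi. rewrite IHn by lia. reflexivity. }
  intros n. apply (H n). lia.
Qed.

Definition ev (k : nat) : R := E k 0.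

Lemma appell n x : E n x = conv ev (fun k => x ^ k) n.
Proof.
  symmetry. revert n. apply E_unique. intros n.
  transitivity (conv ev (fun k => x ^ k) n + conv (conv ev (fun k => x ^ k)) (fun _ => 1) n).
  { f_equal. unfold conv at 2. apply sum_eq. intros; ring. }
  rewrite conv_assoc.
  rewrite (conv_ext ev ev (conv (fun k => x ^ k) (fun _ => 1)) (conv (fun _ => 1) (fun k => x ^ k)))
    by (auto; intros; apply conv_comm).
  rewrite <- conv_assoc.
  rewrite (conv_ext (conv ev (fun _ => 1)) (fun m => 2 * 0 ^ m + (-1) * ev m) _ (fun k => x ^ k)); auto.
  2:{ intros k _. pose proof (E_rec k 0) as H. unfold conv. unfold ev at 2.
      rewrite (sum_eq _ (fun i => C k i * E i 0)) by (intros; unfold ev; ring). lra. }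
  unfold conv at 2. rewrite (sum_eq _ (fun k => 2 * (C n k * 0 ^ k * x ^ (n - k)) + (-1) * (C n k * ev k * x ^ (n - k)))) by (intros; ring).
  rewrite sum_lin. rewrite <- binomial. unfold conv. rewrite Rplus_0_l. ring.
Qed.

Lemma E_add n x v : E n (x + v) = conv (fun k => E k x) (fun k => v ^ k) n.
Proof.
  rewrite appell.
  rewrite (conv_ext ev ev _ (conv (fun k => x ^ k) (fun k => v ^ k))); auto.
  2:{ intros k _. apply binomial. }
  rewrite <- conv_assoc. apply conv_ext; auto. intros k _. symmetry. apply appell.
Qed.

Lemma E_sum1 n y : E n y + E n (y + 1) = 2 * y ^ n.
Proof.
  rewrite E_add. rewrite <- (E_rec n y). f_equal. unfold conv. apply sum_eq.
  intros. rewrite pow1. ring.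
Qed.

Lemma E_scaled (a : R) n z u : a <> 0 ->
  a ^ n * E n (z + u / a) = conv (fun i => a ^ i * E i z) (fun k => u ^ k) n.
Proof.
  intros Ha. rewrite E_add. unfold conv. rewrite <- sum_scal_l. apply sum_eq.
  intros k Hk.
  assert (a ^ n = a ^ k * a ^ (n - k)) as ->.
  { rewrite <- pow_add. f_equal. lia. }
  unfold Rdiv. rewrite Rpow_mult_distr, pow_inv.
  field. apply pow_nonzero; auto.
Qed.

Definition T (a c : R) n x z := conv (fun i => c ^ i * E i x) (fun j => a ^ j * E j z) n.

Lemma T_inv a c n x z u : a <> 0 -> c <> 0 ->
  T a c n (x + u / c) z = T a c n x (z + u / a).
Proof.
  intros Ha Hc. unfold T.
  rewrite (conv_ext _ (conv (fun i => c ^ i * E i x) (fun k => u ^ k)) _ (fun j => a ^ j * E j z)); auto.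
  2:{ intros; apply E_scaled; auto. }
  rewrite conv_assoc. apply conv_ext; auto. intros k _.
  rewrite conv_comm. symmetry. apply E_scaled; auto.
Qed.

Lemma T_rel1 a c n x z : c <> 0 ->
  T a c n x z + T a c n x (z + 1) = 2 * (c ^ n * E n (x + a * z / c)).
Proof.
  intros Hc. unfold T. rewrite conv_add_r.
  rewrite (conv_ext _ (fun i => c ^ i * E i x) _ (fun k => 2 * (a * z) ^ k)); auto.
  2:{ intros k _. rewrite Rpow_mult_distr, <- Rmult_plus_distr_l, E_sum1. ring. }
  rewrite conv_scal_r. f_equal. symmetry. apply E_scaled; auto.
Qed.

Lemma T_comm a c n x z : T a c n x z = T c a n z x.
Proof. unfold T. apply conv_comm. Qed.

Definition Phi (a c : R) n M := T a c n 0 (M / a).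

Lemma Phi_rel a c n M : a <> 0 -> c <> 0 ->
  Phi a c n M + Phi a c n (M + a) = 2 * (c ^ n * E n (M / c)).
Proof.
  intros Ha Hc. unfold Phi.
  replace ((M + a) / a) with (M / a + 1) by (field; auto).
  rewrite T_rel1 by auto. do 3 f_equal. field. split; auto.
Qed.

Lemma Phi_sym a c n M : a <> 0 -> c <> 0 -> Phi a c n M = Phi c a n M.
Proof.
  intros Ha Hc. unfold Phi. rewrite T_comm.
  pose proof (T_inv c a n 0 0 M Hc Ha) as H.
  rewrite !Rplus_0_l in H. exact H.
Qed.

Lemma T_Phi a c n x z : a <> 0 -> c <> 0 -> T a c n x z = Phi a c n (a * z + c * x).
Proof.
  intros Ha Hc. unfold Phi.
  pose proof (T_inv a c n 0 z (c * x) Ha Hc) as H.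
  replace (0 + c * x / c) with x in H by (field; auto).
  rewrite H. f_equal. field. auto.
Qed.

Lemma IP_unique r k : IZR k <= r < IZR k + 1 -> Int_part r = k.
Proof.
  intros [H1 H2]. unfold Int_part.
  assert ((k + 1)%Z = up r).
  { apply tech_up; rewrite plus_IZR; simpl; lra. }
  lia.
Qed.

Lemma IP_shift r : Int_part (r + 1) = (Int_part r + 1)%Z.
Proof.
  apply IP_unique. destruct (base_Int_part r). rewrite plus_IZR. simpl. lra.
Qed.

Lemma IP_01 r : 0 <= r < 1 -> Int_part r = 0%Z.
Proof. intros H. apply IP_unique. simpl. lra. Qed.

Lemma EF_shift n y : euler_fun n (y + 1) = - euler_fun n y.
Proof.
  unfold euler_fun. rewrite IP_shift, powerRZ_add by lra.
  replace (y + 1 - IZR (Int_part y + 1)) with (y - IZR (Int_part y))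
    by (rewrite plus_IZR; simpl; ring).
  simpl. ring.
Qed.

Lemma EF_01 n y : 0 <= y < 1 -> euler_fun n y = E n y.
Proof.
  intros H. unfold euler_fun. rewrite IP_01 by auto. simpl.
  replace (y - 0) with y by ring. ring.
Qed.

Lemma EF_shiftN n y m : euler_fun n (y + INR m) = (-1) ^ m * euler_fun n y.
Proof.
  induction m.
  - simpl. rewrite Rplus_0_r. ring.
  - rewrite S_INR, <- Rplus_assoc, EF_shift, IHm. simpl. ring.
Qed.

Lemma odd_pow a c : Nat.odd (a + c) = true -> (-1) ^ a * (-1) ^ c = -1.
Proof.
  intros H. rewrite <- pow_add. apply Nat.odd_spec in H. destruct H as [q Hq].
  rewrite Hq. replace (2 * q + 1)%nat with (S (2 * q)) by lia. apply pow_1_odd.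
Qed.

Lemma sum_opp (f : nat -> R) n : sum_f_R0 (fun k => - f k) n = - sum_f_R0 f n.
Proof. induction n; simpl; [ring| rewrite IHn; ring]. Qed.

Definition Hf (a c : nat) n M : R :=
  INR c ^ n * sum_f_R0 (fun mu => (-1) ^ mu * euler_fun n ((INR a * INR mu + M) / INR c)) (c - 1).

Lemma H2 a c n M : (0 < c)%nat -> Hf a c n (M + INR c) = - Hf a c n M.
Proof.
  intros Hc. unfold Hf. rewrite Ropp_mult_distr_r, <- sum_opp. f_equal.
  apply sum_eq. intros i Hi.
  replace ((INR a * INR i + (M + INR c)) / INR c) with ((INR a * INR i + M) / INR c + 1).
  - rewrite EF_shift. ring.
  - field. apply not_0_INR. lia.
Qed.

Lemma H1 a c n M : (0 < a)%nat -> (0 < c)%nat -> Nat.odd (a + c) = true ->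
  Hf a c n M + Hf a c n (M + INR a) = 2 * (INR c ^ n * euler_fun n (M / INR c)).
Proof.
  intros Ha Hc Hodd. unfold Hf.
  set (g := fun mu => euler_fun n ((INR a * INR mu + M) / INR c)).
  assert (Hcn : INR c <> 0) by (apply not_0_INR; lia).
  destruct c as [|c']; [lia|]. replace (S c' - 1)%nat with c' by lia.
  assert (E1 : sum_f_R0 (fun mu => (-1) ^ mu * euler_fun n ((INR a * INR mu + (M + INR a)) / INR (S c'))) c'
     = sum_f_R0 (fun i => (-1) ^ i * g (S i)) c').
  { apply sum_eq. intros i Hi. unfold g. do 2 f_equal. rewrite (S_INR i). field. auto. }
  assert (E0 : sum_f_R0 (fun mu => (-1) ^ mu * euler_fun n ((INR a * INR mu + M) / INR (S c'))) c'
     = sum_f_R0 (fun i => (-1) ^ i * g i) c') by reflexivity.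
  rewrite E1, E0, sum_shift_alt.
  assert (Hg : g (S c') = (-1) ^ a * g 0%nat).
  { unfold g. rewrite <- EF_shiftN. f_equal. change (INR 0) with 0. field. auto. }
  rewrite Hg.
  replace (g 0%nat) with (euler_fun n (M / INR (S c'))) by (unfold g; f_equal; change (INR 0) with 0; field; auto).
  pose proof (odd_pow a (S c') Hodd) as Ho.
  set (s := sum_f_R0 _ c'). set (w := euler_fun n _). set (q := INR (S c') ^ n).
  set (u := (-1) ^ a) in *. set (v := (-1) ^ S c') in *.
  replace (v * (u * w)) with (u * v * w) by ring.
  rewrite Ho. ring.
Qed.

Definition D (a c : nat) n M := Hf a c n M + Hf c a n M - Phi (INR a) (INR c) n M.

Lemma D_sym a c n M : (0 < a)%nat -> (0 < c)%nat -> D a c n M = D c a n M.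
Proof.
  intros Ha Hc. unfold D. rewrite Phi_sym by (apply not_0_INR; lia). ring.
Qed.

Lemma div01 u c : 0 < c -> 0 <= u -> u < c -> 0 <= u / c < 1.
Proof.
  intros Hc H1 H2. split.
  - unfold Rdiv. apply Rmult_le_pos; [lra|]. left. apply Rinv_0_lt_compat. lra.
  - apply (Rmult_lt_reg_r c); auto. unfold Rdiv. rewrite Rmult_assoc, Rinv_l by lra. lra.
Qed.

Lemma D_rel a c n M : (0 < a)%nat -> (0 < c)%nat -> Nat.odd (a + c) = true ->
  0 <= M < INR c -> D a c n M + D a c n (M + INR a) = 0.
Proof.
  intros Ha Hc Hodd HM. unfold D.
  pose proof (H1 a c n M Ha Hc Hodd) as A1.
  pose proof (H2 c a n M Ha) as A2.
  pose proof (Phi_rel (INR a) (INR c) n M ltac:(apply not_0_INR; lia) ltac:(apply not_0_INR; lia)) as A3.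
  assert (0 < INR c) by (apply lt_0_INR; lia).
  rewrite EF_01 in A1 by (apply div01; lra).
  lra.
Qed.

Lemma D_rel2 a c n M : (0 < a)%nat -> (0 < c)%nat -> Nat.odd (a + c) = true ->
  0 <= M < INR a -> D a c n M + D a c n (M + INR c) = 0.
Proof.
  intros Ha Hc Hodd HM. rewrite !(D_sym a c) by auto. apply D_rel; auto.
  rewrite Nat.add_comm; auto.
Qed.

Lemma cycle (f : nat -> R) a c :
  (forall k, (k < c)%nat -> f k + f (k + a)%nat = 0) ->
  (forall k, (k < a)%nat -> f k + f (k + c)%nat = 0) ->
  Nat.odd (a + c) = true -> forall k, (k < a + c)%nat -> f k = 0.
Proof.
  intros F1 F2 Hodd.
  set (N := (a + c)%nat).
  assert (HN : N <> 0%nat) by (unfold N; destruct (a + c)%nat; [discriminate|lia]).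
  set (sg := fun k => if (k <? c)%nat then (k + a)%nat else (k - c)%nat).
  assert (Hs : forall k, (k < N)%nat -> f (sg k) = - f k /\ sg k = ((k + a) mod N)%nat).
  { intros k Hk. unfold sg. destruct (Nat.ltb_spec k c).
    - split. + specialize (F1 k H). lra.
      + symmetry. apply Nat.mod_small. unfold N in *. lia.
    - split. + specialize (F2 (k - c)%nat ltac:(unfold N in *; lia)).
        replace (k - c + c)%nat with k in F2 by lia. lra.
      + replace (k + a)%nat with ((k - c) + 1 * N)%nat by (unfold N in *; lia).
        rewrite Nat.Div0.mod_add. symmetry. apply Nat.mod_small. unfold N in *; lia. }
  assert (Hit : forall m k, (k < N)%nat ->
     f (Nat.iter m sg k) = (-1) ^ m * f k /\ Nat.iter m sg k = ((k + m * a) mod N)%nat).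
  { induction m; intros k Hk.
    - simpl. rewrite Nat.add_0_r, Nat.mod_small by auto. split; [ring|reflexivity].
    - destruct (IHm k Hk) as [IH1 IH2]. simpl Nat.iter.
      assert (Hlt : (Nat.iter m sg k < N)%nat) by (rewrite IH2; apply Nat.mod_upper_bound; auto).
      destruct (Hs _ Hlt) as [S1 S2]. split.
      + rewrite S1, IH1. simpl. ring.
      + rewrite S2, IH2, Nat.Div0.add_mod_idemp_l. f_equal. lia. }
  intros k Hk. destruct (Hit N k Hk) as [I1 I2].
  rewrite I2 in I1. rewrite Nat.mul_comm, Nat.Div0.mod_add, Nat.mod_small in I1 by auto.
  assert (Hp : (-1) ^ N = -1).
  { unfold N. rewrite pow_add. apply odd_pow. auto. }
  rewrite Hp in I1. lra.
Qed.

Lemma D_zero a c n M : (0 < a)%nat -> (0 < c)%nat -> Nat.odd (a + c) = true ->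
  0 <= M < INR a + INR c -> D a c n M = 0.
Proof.
  intros Ha Hc Hodd HM.
  set (k0 := Z.to_nat (Int_part M)).
  destruct (base_Int_part M) as [B1 B2].
  assert (HI : (0 <= Int_part M)%Z).
  { destruct (Z_le_gt_dec 0 (Int_part M)) as [|Hg]; auto. exfalso.
    assert (Hle : (Int_part M <= -1)%Z) by lia. apply IZR_le in Hle.
    change (IZR (-1)) with (- (1)) in Hle. lra. }
  assert (Hk0 : INR k0 = IZR (Int_part M)).
  { unfold k0. rewrite INR_IZR_INZ, Z2Nat.id; auto. }
  set (m0 := M - INR k0).
  assert (Hm0 : 0 <= m0 < 1) by (unfold m0; lra).
  assert (HM' : M = m0 + INR k0) by (unfold m0; ring).
  assert (Hk : (k0 < a + c)%nat).
  { apply INR_lt. rewrite plus_INR. lra. }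
  rewrite HM'.
  apply (cycle (fun k => D a c n (m0 + INR k)) a c); auto.
  - intros k Hkc. rewrite plus_INR, <- Rplus_assoc. apply D_rel; auto.
    assert (INR (S k) <= INR c) by (apply le_INR; lia). rewrite S_INR in H.
    pose proof (pos_INR k). lra.
  - intros k Hka. rewrite plus_INR, <- Rplus_assoc. apply D_rel2; auto.
    assert (INR (S k) <= INR a) by (apply le_INR; lia). rewrite S_INR in H.
    pose proof (pos_INR k). lra.
Qed.

Lemma idx_bound i c z : (0 < c)%nat -> (i <= c - 1)%nat -> 0 <= z < 1 ->
  0 <= (INR i + z) / INR c < 1.
Proof.
  intros Hc Hi Hz. apply div01.
  - apply lt_0_INR; lia.
  - pose proof (pos_INR i); lra.
  - assert (INR (S i) <= INR c) by (apply le_INR; lia). rewrite S_INR in H. lra.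
Qed.

Lemma S_to_Hf a c n x z : (0 < c)%nat -> 0 <= z < 1 ->
  INR c ^ n * S_sum (S n) a c x z = Hf a c n (INR a * z + INR c * x).
Proof.
  intros Hc Hz. unfold S_sum, Hf. replace (S n - 1)%nat with n by lia.
  f_equal. apply sum_eq. intros i Hi.
  rewrite (EF_01 0) by (apply idx_bound; auto). rewrite E0, Rmult_1_r.
  f_equal. f_equal. field. apply not_0_INR. lia.
Qed.

Lemma S1 p a c x z : S_sum p a c (x + 1) z = - S_sum p a c x z.
Proof.
  unfold S_sum. rewrite <- sum_opp. apply sum_eq. intros i Hi.
  rewrite <- Rplus_assoc, EF_shift. ring.
Qed.

Lemma S2 p a c x z : (0 < a)%nat -> (0 < c)%nat -> Nat.odd (a + c) = true ->
  S_sum p a c x (z + 1) = - S_sum p a c x z.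
Proof.
  intros Ha Hc Hodd. unfold S_sum.
  assert (Hcn : INR c <> 0) by (apply not_0_INR; lia).
  set (g := fun mu => euler_fun (p - 1) (INR a * (INR mu + z) / INR c + x)
                      * euler_fun 0 ((INR mu + z) / INR c)).
  destruct c as [|c']; [lia|]. replace (S c' - 1)%nat with c' by lia.
  assert (E1 : sum_f_R0 (fun mu => (-1) ^ mu * euler_fun (p - 1) (INR a * (INR mu + (z + 1)) / INR (S c') + x)
                     * euler_fun 0 ((INR mu + (z + 1)) / INR (S c'))) c'
     = sum_f_R0 (fun i => (-1) ^ i * g (S i)) c').
  { apply sum_eq. intros i Hi. unfold g. rewrite Rmult_assoc. f_equal.
    f_equal; f_equal; rewrite (S_INR i); field; auto. }
  assert (E0 : sum_f_R0 (fun mu => (-1) ^ mu * euler_fun (p - 1) (INR a * (INR mu + z) / INR (S c') + x)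
                     * euler_fun 0 ((INR mu + z) / INR (S c'))) c'
     = sum_f_R0 (fun i => (-1) ^ i * g i) c') by (apply sum_eq; intros; unfold g; ring).
  rewrite E1, E0, sum_shift_alt.
  assert (Hg : g (S c') = - ((-1) ^ a * g 0%nat)).
  { unfold g.
    replace (INR a * (INR (S c') + z) / INR (S c') + x)
      with (INR a * (INR 0 + z) / INR (S c') + x + INR a)
      by (change (INR 0) with 0; field; auto).
    replace ((INR (S c') + z) / INR (S c')) with ((INR 0 + z) / INR (S c') + 1)
      by (change (INR 0) with 0; field; auto).
    rewrite EF_shift, EF_shiftN. ring. }
  rewrite Hg.
  pose proof (odd_pow a (S c') Hodd) as Ho.
  set (s := sum_f_R0 _ c'). set (w := g 0%nat).
  set (u := (-1) ^ a) in *. set (v := (-1) ^ S c') in *.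
  replace (v * - (u * w)) with (- (u * v * w)) by ring.
  rewrite Ho. ring.
Qed.

Definition RHSf (a c p : nat) (x z : R) : R :=
  sum_f_R0 (fun i => let j := S i in
       C (p - 1) (j - 1) * INR a ^ (p + 1 - j) * INR c ^ j
       * euler_fun (p - j) z * euler_fun (j - 1) x) (p - 1).

Definition LHSf (a c p : nat) (x z : R) : R :=
  INR a * INR c ^ p * S_sum p a c x z + INR c * INR a ^ p * S_sum p c a z x.

Lemma square a c n x z : (0 < a)%nat -> (0 < c)%nat -> Nat.odd (a + c) = true ->
  0 <= x < 1 -> 0 <= z < 1 -> LHSf a c (S n) x z = RHSf a c (S n) x z.
Proof.
  intros Ha Hc Hodd Hx Hz.
  assert (Han : INR a <> 0) by (apply not_0_INR; lia).
  assert (Hcn : INR c <> 0) by (apply not_0_INR; lia).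
  set (M := INR a * z + INR c * x).
  assert (L : LHSf a c (S n) x z = INR a * INR c * (Hf a c n M + Hf c a n M)).
  { unfold LHSf, M. rewrite <- (S_to_Hf a c n x z) by auto.
    rewrite (Rplus_comm (INR a * z)). rewrite <- (S_to_Hf c a n z x) by auto.
    change (INR c ^ S n) with (INR c * INR c ^ n).
    change (INR a ^ S n) with (INR a * INR a ^ n). ring. }
  assert (R : RHSf a c (S n) x z = INR a * INR c * T (INR a) (INR c) n x z).
  { unfold RHSf, T, conv. replace (S n - 1)%nat with n by lia.
    rewrite <- sum_scal_l. apply sum_eq. intros i Hi. cbv zeta.
    replace (S i - 1)%nat with i by lia.
    replace (S n + 1 - S i)%nat with (S (n - i)) by lia.
    replace (S n - S i)%nat with (n - i)%nat by lia.
    rewrite !EF_01 by auto.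
    change (INR a ^ S (n - i)) with (INR a * INR a ^ (n - i)).
    change (INR c ^ S i) with (INR c * INR c ^ i). ring. }
  rewrite L, R, T_Phi by auto. fold M.
  pose proof (D_zero a c n M Ha Hc Hodd) as HD. unfold D in HD.
  assert (0 <= M < INR a + INR c).
  { unfold M. pose proof (pos_INR a). pose proof (pos_INR c). split; nra. }
  assert (Hf a c n M + Hf c a n M = Phi (INR a) (INR c) n M) by (specialize (HD H); lra).
  rewrite H0. ring.
Qed.

Lemma RHS_x a c p x z : RHSf a c p (x + 1) z = - RHSf a c p x z.
Proof.
  unfold RHSf. rewrite <- sum_opp. apply sum_eq. intros i Hi. cbv zeta.
  rewrite EF_shift. ring.
Qed.

Lemma RHS_z a c p x z : RHSf a c p x (z + 1) = - RHSf a c p x z.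
Proof.
  unfold RHSf. rewrite <- sum_opp. apply sum_eq. intros i Hi. cbv zeta.
  rewrite EF_shift. ring.
Qed.

Lemma antiper_zero (phi : R -> R) :
  (forall y, phi (y + 1) = - phi y) -> (forall y, 0 <= y < 1 -> phi y = 0) ->
  forall y, phi y = 0.
Proof.
  intros Hs H0 y.
  set (y0 := y - IZR (Int_part y)).
  destruct (base_Int_part y) as [B1 B2].
  assert (Hy0 : phi y0 = 0) by (apply H0; unfold y0; lra).
  assert (Pp : forall m, phi (y0 + INR m) = 0).
  { induction m; [simpl; rewrite Rplus_0_r; auto|].
    rewrite S_INR, <- Rplus_assoc, Hs, IHm. ring. }
  assert (Pn : forall m, phi (y0 - INR m) = 0).
  { induction m; [simpl; rewrite Rminus_0_r; auto|].
    assert (phi (y0 - INR (S m) + 1) = - phi (y0 - INR (S m))) by apply Hs.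
    replace (y0 - INR (S m) + 1) with (y0 - INR m) in H by (rewrite S_INR; ring).
    lra. }
  replace y with (y0 + IZR (Int_part y)) by (unfold y0; ring).
  destruct (Z_le_gt_dec 0 (Int_part y)) as [Hp|Hn].
  - rewrite <- (Z2Nat.id _ Hp), <- INR_IZR_INZ. apply Pp.
  - replace (Int_part y) with (- Z.of_nat (Z.to_nat (- Int_part y)))%Z by lia.
    rewrite opp_IZR, <- INR_IZR_INZ. apply Pn.
Qed.

Theorem corollary1 (a c : nat) (ha : (0 < a)%nat) (hc : (0 < c)%nat)
  (hcop : Nat.gcd a c = 1%nat) (hodd : Nat.odd (a + c) = true)
  (p : nat) (hp : (1 <= p)%nat) (x z : R) :
  INR a * INR c ^ p * S_sum p a c x z + INR c * INR a ^ p * S_sum p c a z x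
  = sum_f_R0 (fun i => let j := S i in
       Binomial.C (p - 1) (j - 1) * INR a ^ (p + 1 - j) * INR c ^ j
       * euler_fun (p - j) z * euler_fun (j - 1) x) (p - 1).
Proof.
  change (LHSf a c p x z = RHSf a c p x z).
  destruct p as [|n]; [lia|].
  assert (Hodd' : Nat.odd (c + a) = true) by (rewrite Nat.add_comm; auto).
  cut (forall x z, LHSf a c (S n) x z - RHSf a c (S n) x z = 0).
  { intros H. specialize (H x z). lra. }
  clear x z. intros x.
  apply (antiper_zero (fun z => LHSf a c (S n) x z - RHSf a c (S n) x z)).
  { intros z. unfold LHSf at 1. rewrite RHS_z, S2, S1 by auto. unfold LHSf. ring. }
  intros z Hz. revert x.
  apply (antiper_zero (fun x => LHSf a c (S n) x z - RHSf a c (S n) x z)).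
  { intros x. unfold LHSf at 1. rewrite RHS_x, S1, S2 by auto. unfold LHSf. ring. }
  intros x Hx. rewrite square by auto. ring.
Qed.
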